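(* Let $S$ be an eventually regular semigroup with a primitive idempotent $e$. Then the ideal of $S$ generated by $e$ is completely simple (and $J_e$ is the minimum $\mathcal J$-class of $S$).
   Context: $S$ is eventually regular if for each $a\in S$ there are $n\ge1$, $b\in S$ with $a^nba^n=a^n$. An idempotent $e$ is primitive if for every idempotent $f$ with $ef=fe=f$ one has $f=e$. $J_e$ denotes the Green's $\mathcal J$-class of $e$. *)

(* Defs.v *)
From Stdlib Require Import Arith.

Set Implicit Arguments.
Section Semigroups.
Variables (T : Type) (mul : T -> T -> T).

(* spow a n = a^(n+1), i.e. positive powers of a *)
Fixpoint spow (a : T) (n : nat) : T :=
  match n with
  | O => a
  | Datatypes.S m => mul a (spow a m)
  end.

Definition eventually_regular : Prop :=
  forall a : T, exists (n : nat) (b : T),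
    mul (mul (spow a n) b) (spow a n) = spow a n.

Definition idempotent (e : T) : Prop := mul e e = e.

Definition primitive (e : T) : Prop :=
  idempotent e /\
  forall f : T, idempotent f -> mul e f = f -> mul f e = f -> f = e.

(* a \in S^1 x S^1, i.e. a lies in the principal two-sided ideal generated by x *)
Definition in_ideal_gen (x a : T) : Prop :=
  a = x \/ (exists s, a = mul s x) \/ (exists t, a = mul x t)
  \/ (exists s t, a = mul (mul s x) t).

(* J-order: J_a <= J_b  iff  S^1 a S^1 ⊆ S^1 b S^1  iff  a ∈ S^1 b S^1 *)
Definition Jle (a b : T) : Prop := in_ideal_gen b a.

Definition mul_closed (A : T -> Prop) : Prop :=
  forall a b, A a -> A b -> A (mul a b).

Definition is_ideal_of (A J : T -> Prop) : Prop :=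
  (forall j, J j -> A j) /\
  (forall a j, A a -> J j -> J (mul a j) /\ J (mul j a)).

Definition simple_sub (A : T -> Prop) : Prop :=
  (exists a, A a) /\
  forall J, is_ideal_of A J -> (exists j, J j) -> forall a, A a -> J a.

Definition primitive_in (A : T -> Prop) (e : T) : Prop :=
  A e /\ idempotent e /\
  forall f, A f -> idempotent f -> mul e f = f -> mul f e = f -> f = e.

Definition completely_simple_sub (A : T -> Prop) : Prop :=
  mul_closed A /\ simple_sub A /\ exists e, primitive_in A e.

End Semigroups.

(* Main.v *)
Require Import Defs.

Theorem lemma3p5 (S : Type) (mul : S -> S -> S)
  (mulA : forall a b c : S, mul a (mul b c) = mul (mul a b) c)
  (Hreg : eventually_regular (T:=S) mul) (e : S) (He : primitive (T:=S) mul e) :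
  completely_simple_sub (T:=S) mul (in_ideal_gen (T:=S) mul e) /\
  (forall a : S, Jle (T:=S) mul e a).
Proof.
  destruct He as [Hid Hprim]. unfold idempotent in Hid.
  assert (HJ : forall a : S, exists t, e = mul (mul e a) t).
  { intro a. set (x := mul (mul e a) e).
    destruct (Hreg x) as [n [b Hb]].
    assert (Hz : forall m, exists z, spow mul x m = mul (mul e a) z).
    { induction m as [|m [z Hz]]; simpl.
      - exists e; reflexivity.
      - exists (mul e (spow mul x m)). unfold x. rewrite <- !mulA. reflexivity. }
    assert (Hl : forall m, mul e (spow mul x m) = spow mul x m).
    { induction m; simpl.
      - unfold x. rewrite !mulA, Hid. reflexivity.
      - rewrite mulA. unfold x. rewrite !mulA, Hid. reflexivity. }
    assert (Hr : forall m, mul (spow mul x m) e = spow mul x m).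
    { induction m; simpl.
      - unfold x. rewrite <- !mulA, Hid. reflexivity.
      - rewrite <- mulA, IHm. reflexivity. }
    set (y := spow mul x n) in *.
    set (c := mul (mul e b) e).
    assert (Hly : mul e y = y) by apply Hl.
    assert (Hry : mul y e = y) by apply Hr.
    assert (Hyc : mul (mul y c) y = y).
    { unfold c.
      replace (mul (mul y (mul (mul e b) e)) y)
        with (mul (mul (mul y e) b) (mul e y)) by (rewrite !mulA; reflexivity).
      rewrite Hly, Hry. exact Hb. }
    assert (Hf : mul y c = e).
    { apply Hprim.
      - unfold idempotent. rewrite mulA, Hyc. reflexivity.
      - rewrite mulA, Hly. reflexivity.
      - unfold c. rewrite <- !mulA, Hid. reflexivity. }
    destruct (Hz n) as [z Hz']. fold y in Hz'.
    exists (mul z c). rewrite <- Hf at 1. rewrite Hz', <- mulA. reflexivity. }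
  split.
  2:{ intro a. destruct (HJ a) as [t H]. unfold Jle, in_ideal_gen.
      right; right; right. exists e, t. exact H. }
  assert (Ie : in_ideal_gen mul e e) by (left; reflexivity).
  assert (Ise : forall s, in_ideal_gen mul e (mul s e)) by (intro s; right; left; exists s; reflexivity).
  assert (Iet : forall t, in_ideal_gen mul e (mul e t)) by (intro t; right; right; left; exists t; reflexivity).
  split; [|split].
  - intros a b Ha _. unfold in_ideal_gen.
    destruct Ha as [->|[[s ->]|[[t ->]|[s [t ->]]]]].
    + right; right; left. exists b; reflexivity.
    + right; right; right. exists s, b; reflexivity.
    + right; right; left. exists (mul t b). rewrite mulA; reflexivity.
    + right; right; right. exists s, (mul t b). rewrite mulA; reflexivity.
  - split. { exists e; exact Ie. }
    intros J [HJA HJid] [j Hj] a Ha.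
    assert (Jej : J e).
    { destruct (HJ j) as [t Het].
      assert (E : e = mul (mul e j) (mul t e)).
      { rewrite mulA, <- Het, Hid. reflexivity. }
      rewrite E. apply (HJid (mul t e) (mul e j) (Ise t)).
      apply (HJid e j Ie Hj). }
    assert (Hpq : forall p q, in_ideal_gen mul e p -> in_ideal_gen mul e q ->
                  J (mul (mul p e) q)).
    { intros p q Hp Hq. apply (HJid q _ Hq). apply (HJid p e Hp Jej). }
    destruct Ha as [->|[[s ->]|[[t ->]|[s [t ->]]]]].
    + rewrite <- Hid at 1. rewrite <- Hid at 1. apply Hpq; exact Ie.
    + replace (mul s e) with (mul (mul (mul s e) e) e) by (rewrite <- !mulA, !Hid; reflexivity).
      apply Hpq; auto.
    + replace (mul e t) with (mul (mul e e) (mul e t)) by (rewrite !mulA, !Hid; reflexivity).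
      apply Hpq; auto.
    + replace (mul (mul s e) t) with (mul (mul (mul s e) e) (mul e t))
        by (rewrite <- !mulA; repeat (rewrite (mulA e e), Hid); reflexivity).
      apply Hpq; auto.
  - exists e. split; [exact Ie|]. split; [exact Hid|].
    intros f _ Hf1 Hf2 Hf3. apply Hprim; assumption.
Qed.
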